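(* Let $\Psi$ be a uniformly random potential on $[K]\times[K]$, let $W_K$ be its number of pure Nash equilibria and $\eta_{W_K}$ the pure Nash equilibrium with the largest potential. Then for every $\delta>0$, \[ \lim_{K\to\infty}\mathbb{P}\left(\frac{\Psi(\eta_{W_K})}{K\log K}<1+\delta\right)=1. \]
   Context: For an integer $K\ge2$ let $[K]=\{1,\dots,K\}$. A potential is a bijection $\Psi:[K]\times[K]\to[K^2]$, representing a two-player game where player A chooses the row, player B the column, and lower potential is better; a uniformly random potential is a uniformly random such bijection. A pure Nash equilibrium is a profile $(a^*,b^* )$ with $\Psi(a^*,b^* )\le\Psi(a,b^* )$ for all $a\in[K]$ and $\Psi(a^*,b^* )\le\Psi(a^*,b)$ for all $b\in[K]$ (i.e. its value is the minimum of its row and of its column). Pure Nash equilibria are ordered by increasing potential $\eta_1,\dots,\eta_{W_K}$. *)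

(* Defs.v *)
From HB Require Import structures.
From mathcomp Require Import all_boot all_order all_algebra.
From mathcomp Require Import all_classical all_reals all_analysis.
Set Implicit Arguments. Unset Strict Implicit. Unset Printing Implicit Defensive.
Import Order.TTheory GRing.Theory Num.Theory.

(* A (candidate) potential on [K] x [K]: a finite function from
   'I_K * 'I_K (row of A, column of B) to 'I_(K*K); the potential value
   of a profile p is (Psi p).+1, so values range over {1,...,K^2}. *)
Definition potential (K : nat) := {ffun 'I_K * 'I_K -> 'I_(K * K)}.

(* Psi is a genuine potential iff it is a bijection onto [K^2];
   since domain and codomain have the same cardinality, injectivity suffices. *)
Definition is_potential (K : nat) (Psi : potential K) : bool := injectiveb Psi.

Definition pot_val (K : nat) (Psi : potential K) (p : 'I_K * 'I_K) : nat :=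
  (Psi p).+1.

Definition is_PNE (K : nat) (Psi : potential K) (p : 'I_K * 'I_K) : bool :=
  [forall a : 'I_K, pot_val Psi p <= pot_val Psi (a, p.2)] &&
  [forall b : 'I_K, pot_val Psi p <= pot_val Psi (p.1, b)].

Definition max_PNE_val (K : nat) (Psi : potential K) : nat :=
  \max_(p | is_PNE Psi p) pot_val Psi p.

Definition prob_potential (R : realType) (K : nat) (E : pred (potential K)) : R :=
  (#|[pred Psi : potential K | is_potential Psi && E Psi]|%:R /
   #|[pred Psi : potential K | is_potential Psi]|%:R)%R.

(* Main.v *)
Require Import Defs.
From HB Require Import structures.
From mathcomp Require Import all_boot all_order all_algebra.
From mathcomp Require Import all_classical all_reals all_analysis.
From mathcomp Require Import zify.
Import Order.TTheory GRing.Theory Num.Theory.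
Import numFieldNormedType.Exports.
Section Count.
Variables (D T : finType) (U : {set T}).
Definition cnt (S : {set D}) :=
  #|[set f : {ffun D -> T} | injectiveb f & [forall x in S, f x \in U]]|.

Definition sw (s t x : D) := if x == s then t else if x == t then s else x.
Lemma swK s t : involutive (sw s t).
Proof.
move=> x; rewrite /sw.
case: (eqVneq x s) => [->|hxs].
  by rewrite eqxx; case: eqVneq => [->|_]; rewrite ?eqxx.
case: (eqVneq x t) => [->|hxt]; first by rewrite eqxx.
by rewrite (negbTE hxs) (negbTE hxt).
Qed.

Definition phi s t (f : {ffun D -> T}) : {ffun D -> T} := [ffun x => f (sw s t x)].
Lemma phiK s t : involutive (phi s t).
Proof. by move=> f; apply/ffunP => x; rewrite !ffunE swK. Qed.

Lemma phi_inj s t f : injectiveb (phi s t f) = injectiveb f.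
Proof.
apply/injectiveP/injectiveP => h x y.
  move=> e; apply: (can_inj (swK s t)); apply: h; by rewrite !ffunE !swK.
rewrite !ffunE => /h; exact: (can_inj (swK s t)).
Qed.

Lemma card_sum (X : finType) (A : {set X}) (P : pred X) :
  #|[set x in A | P x]| = \sum_(x in A) P x.
Proof.
rewrite -sum1_card big_mkcond [RHS]big_mkcond /=; apply: eq_bigr => x _.
by rewrite !inE; case: (x \in A); case: (P x).
Qed.

Lemma step (S0 : {set D}) (s : D) : s \notin S0 ->
  cnt (s |: S0) * (#|D| - #|S0|) <= cnt S0 * (#|U| - #|S0|).
Proof.
move=> sS0.
set B0 := [set f : {ffun D -> T} | injectiveb f & [forall x in S0, f x \in U]].
have e1 : forall t, t \notin S0 -> #|[set f in B0 | f t \in U]| = cnt (s |: S0).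
  move=> t tS0; rewrite -(card_imset _ (can_inj (phiK s t))).
  rewrite (can2_imset_pre _ (phiK s t) (phiK s t)) /cnt; apply: eq_card => g.
  rewrite !inE phi_inj !ffunE.
  have -> : sw s t t = s by rewrite /sw; case: eqVneq => [->|]; rewrite ?eqxx.
  case: (injectiveb g) => //=.
  apply/idP/idP.
    case/andP => /forallP h hs; apply/forallP => x; apply/implyP; rewrite !inE.
    case/orP => [/eqP -> //|xS].
    have := implyP (h x) xS; rewrite ffunE /sw.
    have -> : (x == s) = false by apply/negbTE; apply: contraNneq sS0 => <-.
    by have -> : (x == t) = false by apply/negbTE; apply: contraNneq tS0 => <-.
  move/forallP => h; apply/andP; split; last by have := implyP (h s); rewrite !inE eqxx; apply.
  apply/forallP => x; apply/implyP => xS; rewrite ffunE /sw.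
  have -> : (x == s) = false by apply/negbTE; apply: contraNneq sS0 => <-.
  have -> : (x == t) = false by apply/negbTE; apply: contraNneq tS0 => <-.
  by have := implyP (h x); rewrite !inE xS orbT; apply.
have e2 : \sum_(t in ~: S0) #|[set f in B0 | f t \in U]| = #|~: S0| * cnt (s |: S0).
  rewrite -sum_nat_const; apply: eq_bigr => t; rewrite inE; exact: e1.
have e3 : \sum_(t in ~: S0) #|[set f in B0 | f t \in U]| =
          \sum_(f in B0) #|[set t in ~: S0 | f t \in U]|.
  under eq_bigr do rewrite card_sum.
  rewrite exchange_big /=; apply: eq_bigr => f _; by rewrite card_sum.
have e4 : forall f, f \in B0 -> #|[set t in ~: S0 | f t \in U]| <= #|U| - #|S0|.
  move=> f; rewrite inE => /andP [/injectiveP injf /forallP hf].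
  have -> : [set t in ~: S0 | f t \in U] = [set t | f t \in U] :\: S0.
    by apply/finset.setP => t; rewrite !inE andbC.
  rewrite cardsD.
  have -> : [set t | f t \in U] :&: S0 = S0.
    apply/finset.setIidPr/fintype.subsetP => x xS; rewrite inE; exact: (implyP (hf x)).
  apply: leq_sub2r; rewrite -(card_imset _ injf); apply: subset_leq_card.
  by apply/fintype.subsetP => y /imsetP [x]; rewrite inE => hx ->.
have hC : #|~: S0| = #|D| - #|S0| by rewrite -(cardsC S0) addKn.
rewrite mulnC -hC -e2 e3.
apply: (@leq_trans (\sum_(f in B0) (#|U| - #|S0|))).
  by apply: leq_sum.
by rewrite sum_nat_const.
Qed.

Lemma cnt_bound n (S : {set D}) : #|S| = n -> #|U| <= #|D| ->
  cnt S * #|D| ^ n <= cnt finset.set0 * #|U| ^ n.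
Proof.
elim: n S => [|n IH] S hS hU.
  by rewrite (cards0_eq hS).
case: (set_0Vmem S) => [S0|[x xS]]; first by rewrite S0 cards0 in hS.
have hS0 : #|S :\ x| = n by move: hS; rewrite (cardsD1 x S) xS add1n => [[]].
have := @step (S :\ x) x; rewrite !inE eqxx finset.setD1K // hS0 => /(_ isT) hst.
have hn : n < #|D| by rewrite -hS max_card.
have IH' := IH _ hS0 hU.
move: hst IH'.
set a := cnt S; set b := cnt (S :\ x); set c0 := cnt finset.set0; set N := #|D|; set u := #|U|.
move=> hst IH'.
have key : a * N <= b * u.
  have : a * N * (N - n) <= b * u * (N - n).
    rewrite mulnAC; apply: (leq_trans (leq_mul hst (leqnn N))).
    rewrite -!mulnA leq_mul2l; apply/orP; right.
    have hu : u <= N by [].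
    nia.
  by rewrite leq_pmul2r ?subn_gt0.
rewrite !expnS.
apply: (@leq_trans (b * u * N ^ n)).
  by rewrite mulnA leq_mul2r key orbT.
have -> : b * u * N ^ n = b * N ^ n * u by rewrite mulnAC.
have -> : c0 * (u * u ^ n) = c0 * u ^ n * u by rewrite [u * _]mulnC mulnA.
by rewrite leq_mul2r IH' orbT.
Qed.
End Count.

Lemma union_bound (X I : finType) (A : {set X}) (B : I -> {set X}) :
  (forall x, x \in A -> exists i, x \in B i) -> #|A| <= \sum_i #|B i|.
Proof.
move=> H; rewrite -sum1_card.
apply: (@leq_trans (\sum_(x in A) \sum_i (x \in B i))).
  apply: leq_sum => x /H [i hi]; rewrite (bigD1 i) //= hi; exact: leq_addr.
apply: (@leq_trans (\sum_x \sum_i (x \in B i))).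
  rewrite [X in _ <= X](bigID (fun x => x \in A)) /=; exact: leq_addr.
rewrite exchange_big /=; apply: leq_sum => i _.
by rewrite -sum1_card [X in _ <= X]big_mkcond /=; apply: leq_sum => x _; case: (x \in B i).
Qed.

Section Spec.
Variable K : nat.
Definition cross (p : 'I_K * 'I_K) : {set 'I_K * 'I_K} :=
  [set x | (x.1 == p.1) || (x.2 == p.2)].

Lemma card_cross p : #|cross p| = (K + K).-1.
Proof.
have -> : cross p = [set x | x.1 == p.1] :|: [set x | x.2 == p.2].
  by apply/finset.setP => x; rewrite !inE.
rewrite cardsU.
have h1 : #|[set x : 'I_K * 'I_K | x.1 == p.1]| = K.
  have -> : [set x : 'I_K * 'I_K | x.1 == p.1] = [set (p.1, j) | j : 'I_K].
    apply/finset.setP => [[a b]]; rewrite inE /=; apply/eqP/imsetP => [-> | [j _ [-> _]]] //.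
    by exists b.
  by rewrite card_imset ?card_ord // => i j [].
have h2 : #|[set x : 'I_K * 'I_K | x.2 == p.2]| = K.
  have -> : [set x : 'I_K * 'I_K | x.2 == p.2] = [set (i, p.2) | i : 'I_K].
    apply/finset.setP => [[a b]]; rewrite inE /=; apply/eqP/imsetP => [-> | [j _ [_ ->]]] //.
    by exists a.
  by rewrite card_imset ?card_ord // => i j [].
have h3 : [set x : 'I_K * 'I_K | x.1 == p.1] :&: [set x | x.2 == p.2] = [set p].
  apply/finset.setP => [[a b]]; rewrite !inE; move: h1 h2 => _ _; case: p => c d /=.
  by rewrite xpair_eqE.
by rewrite h1 h2 h3 cards1 subn1.
Qed.

Lemma bad_count (U : {set 'I_(K*K)}) (Bad : {set potential K}) :
  #|U| <= K * K ->
  (forall Psi, Psi \in Bad -> injectiveb Psi /\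
      exists p, forall x, x \in cross p -> Psi x \in U) ->
  #|Bad| * (K * K) ^ (K + K).-1 <=
    (K * K) * (#|[set Psi : potential K | injectiveb Psi]| * #|U| ^ (K + K).-1).
Proof.
move=> hU hB.
have hD : #|{: 'I_K * 'I_K}| = K * K by rewrite card_prod card_ord.
have H1 : #|Bad| * (K * K) ^ (K + K).-1 <= (\sum_(p : 'I_K * 'I_K) @cnt _ _ U (cross p)) * (K * K) ^ (K + K).-1.
  rewrite leq_mul2r; apply/orP; right.
  apply: union_bound => Psi /hB [hi [p hp]]; exists p.
  rewrite inE hi /=; apply/forallP => x; apply/implyP; exact: hp.
apply: (leq_trans H1).
rewrite big_distrl /=.
apply: (@leq_trans (\sum_(p : 'I_K * 'I_K)
   (#|[set Psi : potential K | injectiveb Psi]| * #|U| ^ (K + K).-1))).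
  apply: leq_sum => p _.
  have := @cnt_bound _ _ U _ (cross p) (card_cross p); rewrite hD => /(_ hU).
  suff -> : @cnt _ _ U (finset.set0 : {set 'I_K * 'I_K}) = #|[set Psi : potential K | injectiveb Psi]| by [].
  rewrite /cnt; apply: eq_card => f; rewrite !inE.
  case: (injectiveb f) => //=; apply/forallP => x; by rewrite inE.
by rewrite sum_nat_const card_prod card_ord.
Qed.
End Spec.

From mathcomp Require Import ring lra.
Section Real.
Variables (R : realType) (delta : R).
Hypothesis hd : (0 < delta)%R.
Local Open Scope ring_scope.

Definition tau (K : nat) : R := (1 + delta) * (K%:R * ln (K%:R : R)).
Definition Ev K : pred (potential K) := fun Psi =>
  (max_PNE_val Psi)%:R / (K%:R * ln (K%:R : R)) < 1 + delta.
Definition UU K : {set 'I_(K*K)} := [set v : 'I_(K*K) | tau K <= (v.+1)%:R].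
Definition Bad K : {set potential K} := [set Psi : potential K | injectiveb Psi && ~~ Ev K Psi].

Lemma KL_gt0 K : (2 <= K)%N -> 0 < K%:R * ln (K%:R : R).
Proof.
move=> hK; apply: mulr_gt0; first by rewrite ltr0n; case: K hK.
by apply: ln_gt0; rewrite ltr1n.
Qed.

Lemma tau_gt0 K : (2 <= K)%N -> 0 < tau K.
Proof. move=> hK; apply: mulr_gt0; last exact: KL_gt0.
have := hd; lra. Qed.

Lemma bad_prop K : (2 <= K)%N -> forall Psi : potential K, Psi \in Bad K ->
  injectiveb Psi /\ exists p, forall x, x \in cross K p -> Psi x \in UU K.
Proof.
move=> hK Psi; rewrite inE => /andP [hi hE]; split => //.
have ht : tau K <= (max_PNE_val Psi)%:R.
  move: hE; rewrite /Ev -leNgt ler_pdivlMr ?KL_gt0 //.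
have htpos := tau_gt0 K hK.
move: ht; rewrite /max_PNE_val.
case: (boolP [exists p, is_PNE Psi p]) => [/existsP [p0 hp0] | hno]; last first.
  rewrite big_pred0; first by move=> h; exfalso; move: htpos; lra.
  by move=> p; apply: negbTE; apply: contra hno => h; apply/existsP; exists p.
have [p hp ->] := @eq_bigmax_cond _ (fun p => is_PNE Psi p) (pot_val Psi)
   (ltac:(apply/card_gt0P; exists p0; exact: hp0)).
move=> ht; exists p => x; rewrite inE => /orP [/eqP h1 | /eqP h2].
  move: hp; rewrite /is_PNE => /andP [_ /forallP /(_ x.2)].
  have -> : (p.1, x.2) = x by rewrite -h1; case: x {h1}.
  move=> hle; rewrite inE; apply: (le_trans ht); by rewrite ler_nat.
move: hp; rewrite /is_PNE => /andP [/forallP /(_ x.1) hle _].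
have hx : (x.1, p.2) = x by rewrite -h2; case: x {h2 hle}.
rewrite hx in hle; rewrite inE; apply: (le_trans ht); by rewrite ler_nat.
Qed.

Definition jj K := minn (Num.truncn (tau K)).-1 (K * K).

Lemma U_card K : (2 <= K)%N -> (#|UU K| <= K * K - jj K)%N.
Proof.
move=> hK.
have hj : (jj K <= K * K)%N by rewrite /jj geq_minr.
set W := [set widen_ord hj i | i : 'I_(jj K)].
have hW : #|W| = jj K.
  rewrite card_imset ?card_ord // => i j /(congr1 val) /= h; exact: val_inj.
have hsub : UU K \subset ~: W.
  apply/fintype.subsetP => v hv; rewrite inE; apply/negP => /imsetP [i _ hvi].
  move: hv; rewrite inE hvi /=.
  have hi : (i < (Num.truncn (tau K)).-1)%N.
    by apply: (leq_trans (ltn_ord i)); rewrite /jj geq_minl.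
  have hi2 : (i.+1 < Num.truncn (tau K))%N.
    by move: hi; case: (Num.truncn (tau K)).
  move: hi2; rewrite truncn_gt_nat => h1 h2.
  have : ((i.+2)%:R : R) <= (i.+1)%:R := le_trans h1 h2.
  by rewrite ler_nat ltnn.
have h1 := subset_leq_card hsub.
have hC := cardsC W; rewrite card_ord in hC.
have e : (#|~: W| + jj K = K * K)%N by rewrite -hW addnC hC.
apply: (leq_trans h1); apply: eq_leq; apply/eqP.
by rewrite -(eqn_add2r (jj K)) subnK // e.
Qed.

Lemma claim (k L d : R) : 2 <= k -> 0 <= L -> 0 < d -> 1 + d <= d * k ->
  (2 + d) * L - 4 <= ((1 + d) * (k * L) - 2) / (k * k) * (2 * k - 1).
Proof.
move=> hk hL hd0 hdk.
have hkk : 0 < k * k by apply: mulr_gt0; lra.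
rewrite mulrAC ler_pdivlMr //.
have h1 : 0 <= L * k * (d * k - (1 + d)).
  by apply: mulr_ge0; [apply: mulr_ge0; lra | lra].
have h2 : 0 <= k * (k - 1) by apply: mulr_ge0; lra.
nra.
Qed.

Lemma per_K K : (2 <= K)%N ->
  `|1 - prob_potential R (Ev K)| <=
    (K * K)%:R * expR (- ((tau K - 2) / (K * K)%:R * ((K + K).-1)%:R)).
Proof.
move=> hK.
have hdd := hd.
set a := #|[set Psi : potential K | injectiveb Psi]|.
set b := #|Bad K|.
have ha : (0 < a)%N.
  by rewrite /a card_inj_ffuns card_ord card_prod card_ord ffactnn fact_gt0.
have hsplit : #|[pred Psi : potential K | is_potential Psi && Ev K Psi]| = (a - b)%N.
  have hB : [set Psi : potential K | injectiveb Psi] :\: [set Psi : potential K | Ev K Psi] = Bad K.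
    by apply/finset.setP => Psi; rewrite !inE andbC.
  have h : (#|[set Psi : potential K | injectiveb Psi] :&: [set Psi : potential K | Ev K Psi]| + b = a)%N.
    by rewrite /b -hB; exact: cardsID.
  rewrite -h addnK; apply: eq_card => Psi; rewrite !inE.
  by rewrite /is_potential.
have hden : #|[pred Psi : potential K | is_potential Psi]| = a.
  by apply: eq_card => Psi; rewrite !inE.
have hba : (b <= a)%N.
  by apply: subset_leq_card; apply/fintype.subsetP => Psi; rewrite !inE => /andP [].
rewrite /prob_potential hsplit hden natrB //.
have haR : 0 < a%:R :> R by rewrite ltr0n.
have -> : 1 - (a%:R - b%:R) / a%:R = b%:R / a%:R :> R.
  by field; rewrite lt0r_neq0.
rewrite ger0_norm ?divr_ge0 ?ler0n //.
have hU : (#|UU K| <= K * K)%N.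
  by apply: leq_trans (max_card _) _; rewrite card_ord.
have hcount := @bad_count K (UU K) (Bad K) hU (bad_prop K hK).
have hUj := U_card K hK.
have hm : (0 < (K + K).-1)%N by rewrite -subn1 subn_gt0; apply: leq_trans hK _; exact: leq_addr.
move: hcount hUj hm; rewrite -/b -/a.
generalize ((K + K).-1) => m.
move=> hcount0 hUj0 hm.
pose u := #|UU K|.
have hcount : (b * (K * K) ^ m <= K * K * (a * u ^ m))%N := hcount0.
have hUj : (u <= K * K - jj K)%N := hUj0.
clear hcount0 hUj0; clearbody u.
have hN : (0 < K * K)%N by rewrite muln_gt0 andbb; apply: leq_trans hK.
have hNR : 0 < (K * K)%:R :> R by rewrite ltr0n.
have htau := tau_gt0 K hK.
have hbound0 : 0 <= (K * K)%:R * expR (- ((tau K - 2) / (K * K)%:R * m%:R)) :> R.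
  by apply: mulr_ge0; [apply: ler0n | apply: expR_ge0].
case: (eqVneq (jj K) (K * K)) => hjN.
  rewrite hjN subnn leqn0 in hUj; move/eqP: hUj => hu0.
  rewrite hu0 exp0n // muln0 muln0 leqn0 muln_eq0 expn_eq0 in hcount.
  have -> : b = 0%N.
    by case/orP: hcount => [/eqP //|/andP [h _]]; move: hN; rewrite (eqP h).
  by rewrite mul0r.
have hj : jj K = (Num.truncn (tau K)).-1.
  move: hjN; rewrite /jj; case: leqP => h //.
  by rewrite eqxx.
have hjle : (jj K <= K * K)%N by rewrite /jj geq_minr.
set NR := (K * K)%:R : R.
set jR := (jj K)%:R : R.
set uR := u%:R : R.
have hcR : b%:R * NR ^+ m <= NR * (a%:R * uR ^+ m).
  by rewrite /NR /uR -!natrX -!natrM ler_nat.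
have s1 : b%:R / a%:R <= NR * (uR / NR) ^+ m.
  have h : b%:R <= NR * (a%:R * uR ^+ m) / NR ^+ m.
    by rewrite ler_pdivlMr ?exprn_gt0.
  rewrite ler_pdivrMr //; apply: (le_trans h); rewrite expr_div_n.
  rewrite [X in _ <= X](_ : _ = NR * (a%:R * uR ^+ m) / NR ^+ m) //; field; rewrite expf_neq0 // lt0r_neq0 //.
have hu1 : uR <= NR - jR by rewrite /uR /NR /jR -natrB // ler_nat.
have s2 : uR / NR <= 1 - jR / NR.
  by rewrite ler_pdivrMr // mulrBl divfK ?lt0r_neq0 // mul1r.
have hx0 : 0 <= uR / NR by apply: divr_ge0; [apply: ler0n | apply: ltW].
have s3 : (uR / NR) ^+ m <= (1 - jR / NR) ^+ m.
  by rewrite ler_pXn2r // nnegrE //; apply: le_trans s2.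
have s4 : (1 - jR / NR) ^+ m <= expR (- (jR / NR)) ^+ m.
  rewrite ler_pXn2r // ?nnegrE ?expR_ge0 //; last by apply: le_trans s2.
  exact: expR_ge1Dx.
have hjt : tau K - 2 <= jR.
  rewrite /jR hj.
  have := truncn_itv (ltW htau); case/andP => _.
  case: (Num.truncn (tau K)) => [|n] h /=.
    by move: h; rewrite mulr1n => h; lra.
  move: h; rewrite -!natr1 => h; lra.
have s5 : expR (- (jR / NR)) ^+ m <= expR (- ((tau K - 2) / NR * m%:R)).
  rewrite -expRM_natr ler_expR mulNr lerN2.
  apply: ler_wpM2r; first exact: ler0n.
  apply: ler_wpM2r; first by rewrite invr_ge0 ltW.
  exact: hjt.
apply: (le_trans s1); apply: ler_wpM2l; first exact: ltW.
apply: (le_trans s3); apply: (le_trans s4); exact: s5.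
Qed.

Lemma final_bound (e : R) : 0 < e -> exists K0, forall K, (K0 <= K)%N ->
  (K * K)%:R * expR (- ((tau K - 2) / (K * K)%:R * ((K + K).-1)%:R)) < e.
Proof.
move=> he.
have hdd := hd.
pose M := expR 4 / (e * delta).
pose K1 := Num.Def.archi_bound ((1 + delta) / delta).
pose K2 := Num.Def.archi_bound (expR M).
exists (maxn 2 (maxn K1 K2)) => K; rewrite !geq_max => /and3P [hK hK1 hK2].
have hk2 : 2 <= K%:R :> R by rewrite ler_nat.
have hk0 : 0 < K%:R :> R by lra.
have hL0 : 0 <= ln (K%:R : R) by apply: ln_ge0; lra.
have hkexp : K%:R = expR (ln (K%:R : R)) :> R by rewrite lnK // posrE.
have hK1' : 1 + delta <= delta * K%:R.
  have h := @archi_boundP _ ((1 + delta) / delta) (ltW (divr_gt0 (ltr_pwDl ltr01 (ltW hdd)) hdd)).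
  have hkk : (K1%:R : R) <= K%:R by rewrite ler_nat.
  rewrite ltr_pdivrMr // in h; nra.
have hLM : M < ln (K%:R : R).
  have h := @archi_boundP _ (expR M) (expR_ge0 _).
  have hkk : (K2%:R : R) <= K%:R by rewrite ler_nat.
  have h2 : expR M < K%:R by apply: lt_le_trans h hkk.
  by rewrite -ltr_ln ?posrE ?expR_gt0 // expRK in h2.
have hm : ((K + K).-1)%:R = 2 * K%:R - 1 :> R.
  rewrite -subn1 natrB ?natrD; first lra.
  by rewrite addn_gt0; case: K hK {hk2 hk0 hL0 hkexp hK1' hLM hK1 hK2}.
rewrite hm natrM /tau.
move: hL0 hLM hK1' hkexp hk2 hk0.
set k := K%:R : R; set L := ln k => hL0 hLM hK1' hkexp hk2 hk0.
have hcl := claim k L delta hk2 hL0 hdd hK1'.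
have hMpos : 0 < M by rewrite /M divr_gt0 ?expR_gt0 ?mulr_gt0.
apply: (@le_lt_trans _ _ (expR (4 - delta * L))).
  rewrite [in X in X * _ <= _]hkexp -expRD -expRD ler_expR.
  lra.
rewrite expRD expRN.
rewrite ltr_pdivrMr ?expR_gt0 //.
have h1 := expR_ge1Dx (delta * L).
have h2 : e * (delta * M) = expR 4 by rewrite /M; field; rewrite ?lt0r_neq0.
have h3 : delta * M < delta * L by rewrite ltr_pM2l.
have h4 : e * (delta * M) < e * (delta * L) by rewrite ltr_pM2l.
have h5 : e * (delta * L) <= e * expR (delta * L) by rewrite ler_pM2l //; lra.
by rewrite mulrC; lra.
Qed.
End Real.

Local Open Scope classical_set_scope.
Local Open Scope ring_scope.

Theorem theorem4p6 (R : realType) (delta : R) (hdelta : 0 < delta) :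
  (fun K : nat =>
     prob_potential R (fun Psi : potential K =>
       (max_PNE_val Psi)%:R / (K%:R * ln (K%:R : R)) < 1 + delta))
  @ \oo --> (1 : R).
Proof.
apply/cvgrPdist_lt => e he.
have [K0 hK0] := @final_bound R delta hdelta e he.
apply: filterS (nbhs_infty_ge (maxn 2 K0)) => K; rewrite geq_max => /andP [hK hK0'].
exact: le_lt_trans (@per_K R delta hdelta K hK) (hK0 _ hK0').
Qed.
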